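(* Let $k_1,k_2$ be integers with $k_2\ge k_1\ge 1$. Then the submodule $\mathcal{J}^{12}$ of $\mathcal{F}$ generated by $\{R_{12}^{n_1,n_2,n_3}: n_1,n_2,n_3\in\mathbb{Z}\}$ is generated by $$J^{12}_{\min}=J^{12}_{(k_1,\infty),[0,\infty)}\cup J^{12}_{(\frac{k_1}{2},k_1],(\frac{k_2}{2},\infty)}\cup J^{12}_{[0,\frac{k_1}{2}],[\frac{k_2}{2},\infty)}.$$
   Context: $\mathcal{F}$ is the free $\mathbb{Z}[A^{\pm1}]$-module with basis the symbols $s_1^{l_1}s_2^{l_2}s_3^{l_3}$, $l_i\ge 0$, extended multilinearly to integer exponents by $s_i^{-1}=0$ and $s_i^{n}=-s_i^{-n-2}$ for $n\le -2$. For $n_i\in\mathbb{Z}$, $R_{12}(n_1,n_2,n_3)=-A^{-n_1-n_2-2}s_1^{n_1}s_2^{n_2}s_3^{n_3}-A^{-n_1-n_2+2}s_1^{n_1-2}s_2^{n_2-2}s_3^{n_3}-A^{-n_1-n_2}s_1^{n_1-1}s_2^{n_2-1}s_3^{n_3+1}-A^{-n_1-n_2}s_1^{n_1-1}s_2^{n_2-1}s_3^{n_3-1}$ and $R_{12}^{n_1,n_2,n_3}=R_{12}(n_1,n_2,n_3)-R_{12}(-n_1+k_1,-n_2+k_2,n_3)$. For subsets $I_1,I_2\subseteq\mathbb{R}$, $J^{12}_{I_1,I_2}=\{R^{n_1,n_2,n_3}_{12}: n_1\in I_1\cap\mathbb{Z},\ n_2\in I_2\cap\mathbb{Z},\ n_3\in\mathbb{Z}_{\ge0}\}$.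 *)

(* Defs.v *)
From HB Require Import structures.
From mathcomp Require Import all_boot all_order all_algebra.
Set Implicit Arguments. Unset Strict Implicit. Unset Printing Implicit Defensive.
Import Order.TTheory GRing.Theory Num.Theory.
Local Open Scope ring_scope.

(* The free Z[A^{+-1}]-module F with basis s1^l1 s2^l2 s3^l3 (l_i >= 0) is
   modelled (as an abelian group) as the free Z-module with basis
   A^e s1^l1 s2^l2 s3^l3 (e : int); an element is its coefficient function.
   We work inside the ambient group of all such coefficient functions;
   every element of F (finite support) is one of them, and the
   submodules considered below consist only of finitely supported ones. *)
Definition vec := int -> nat -> nat -> nat -> int.

Definition vzero : vec := fun _ _ _ _ => 0.
Definition vadd (x y : vec) : vec := fun e a b c => x e a b c + y e a b c.
Definition vopp (x : vec) : vec := fun e a b c => - x e a b c.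
Definition vsub (x y : vec) : vec := vadd x (vopp y).
Definition vshiftA (f : int) (x : vec) : vec := fun e a b c => x (e - f) a b c.

(* extension of s^n to integer exponents:
   s^n = s^n (n >= 0), s^{-1} = 0, s^n = - s^{-n-2} (n <= -2).
   Returns (sign, exponent) or None for the zero case. *)
Definition ext (n : int) : option (int * nat) :=
  match n with
  | Posz m => Some (1, m)
  | Negz 0 => None
  | Negz m.+1 => Some (-1, m)
  end.

(* the element c * A^e * s1^n1 s2^n2 s3^n3, extended multilinearly *)
Definition mon (c e n1 n2 n3 : int) : vec :=
  fun e' a b d =>
    match ext n1, ext n2, ext n3 with
    | Some (t1, m1), Some (t2, m2), Some (t3, m3) =>
        if [&& e' == e, a == m1, b == m2 & d == m3]
        then c * t1 * t2 * t3 else 0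
    | _, _, _ => 0
    end.

Definition R12 (n1 n2 n3 : int) : vec :=
  vadd (vadd (mon (-1) (- n1 - n2 - 2) n1 n2 n3)
             (mon (-1) (- n1 - n2 + 2) (n1 - 2) (n2 - 2) n3))
       (vadd (mon (-1) (- n1 - n2) (n1 - 1) (n2 - 1) (n3 + 1))
             (mon (-1) (- n1 - n2) (n1 - 1) (n2 - 1) (n3 - 1))).

Definition R12s (k1 k2 n1 n2 n3 : int) : vec :=
  vsub (R12 n1 n2 n3) (R12 (- n1 + k1) (- n2 + k2) n3).

(* J^{12}_{I1,I2}, with I1, I2 intervals of Q (all intervals occurring have
   rational endpoints) *)
Definition J12 (k1 k2 : int) (I1 I2 : interval rat) (v : vec) : Prop :=
  exists n1 n2 n3 : int,
    [/\ (n1%:~R : rat) \in I1, (n2%:~R : rat) \in I2, 0 <= n3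
      & v = R12s k1 k2 n1 n2 n3].

Definition Rall (k1 k2 : int) (v : vec) : Prop :=
  exists n1 n2 n3 : int, v = R12s k1 k2 n1 n2 n3.

Definition Jmin (k1 k2 : int) (v : vec) : Prop :=
  J12 k1 k2 `]k1%:~R, +oo[ `[0, +oo[ v \/
  J12 k1 k2 `](k1%:~R / 2), k1%:~R] `](k2%:~R / 2), +oo[ v \/
  J12 k1 k2 `[0, k1%:~R / 2] `[k2%:~R / 2, +oo[ v.

Inductive gen_submod (S : vec -> Prop) : vec -> Prop :=
  | gsm_gen x : S x -> gen_submod S x
  | gsm0 : gen_submod S vzero
  | gsmD x y : gen_submod S x -> gen_submod S y -> gen_submod S (vadd x y)
  | gsmN x : gen_submod S x -> gen_submod S (vopp x)
  | gsmA f x : gen_submod S x -> gen_submod S (vshiftA f x).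

(* Main.v *)
Require Import Defs.
From HB Require Import structures.
From mathcomp Require Import all_boot all_order all_algebra.
From mathcomp Require Import zify ring lra.
From Stdlib Require Import FunctionalExtensionality.
Set Implicit Arguments. Unset Strict Implicit. Unset Printing Implicit Defensive.
Import Order.TTheory GRing.Theory Num.Theory.
Local Open Scope ring_scope.

Ltac pair_atoms H :=
  repeat match goal with
  | |- ?L = ?R =>
    match L with context [H ?x1 ?x2 ?x3 ?x4] =>
    lazymatch R with context [H x1 x2 x3 x4] => fail | _ => idtac end;
    match R with context [H ?y1 ?y2 ?y3 ?y4] =>
      lazymatch L with context [H y1 y2 y3 y4] => fail | _ => idtac end;
      (replace (H y1 y2 y3 y4) with (H x1 x2 x3 x4) by (f_equal; lia))
    end end end.
Ltac pair_atoms8 H :=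
  repeat match goal with
  | |- ?L = ?R =>
    match L with context [H ?x1 ?x2 ?x3 ?x4 ?x5 ?x6 ?x7 ?x8] =>
    lazymatch R with context [H x1 x2 x3 x4 x5 x6 x7 x8] => fail | _ => idtac end;
    match R with context [H ?y1 ?y2 ?y3 ?y4 ?y5 ?y6 ?y7 ?y8] =>
      lazymatch L with context [H y1 y2 y3 y4 y5 y6 y7 y8] => fail | _ => idtac end;
      (replace (H y1 y2 y3 y4 y5 y6 y7 y8) with (H x1 x2 x3 x4 x5 x6 x7 x8) by (f_equal; lia))
    end end end.

Definition Lf := int -> int -> int -> int -> int.
Definition ind (b : bool) : int := if b then 1 else 0.
Definition dl (e0 a0 b0 c0 : int) : Lf :=
  fun e a b c => ind (e == e0) * ind (a == a0) * ind (b == b0) * ind (c == c0).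
Definition addL (f g : Lf) : Lf := fun e a b c => f e a b c + g e a b c.
Definition oppL (f : Lf) : Lf := fun e a b c => - f e a b c.
Definition subL (f g : Lf) : Lf := addL f (oppL g).
Definition zeroL : Lf := fun _ _ _ _ => 0.
Definition sh (de da db dc : int) (f : Lf) : Lf :=
  fun e a b c => f (e - de) (a - da) (b - db) (c - dc).
Definition shA (de : int) (f : Lf) : Lf := fun e a b c => f (e - de) a b c.
Definition iy (f : Lf) : Lf := fun e a b c => f e a (- b) c.
Definition ix (f : Lf) : Lf := fun e a b c => f e (- a) b c.
Definition L0 (f : Lf) : Lf :=
  addL (sh (-2) 1 1 0 f) (addL (sh 2 (-1) (-1) 0 f) (addL (sh 0 0 0 1 f) (sh 0 0 0 (-1) f))).
Definition L0y (f : Lf) : Lf :=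
  addL (sh (-2) 1 (-1) 0 f) (addL (sh 2 (-1) 1 0 f) (addL (sh 0 0 0 1 f) (sh 0 0 0 (-1) f))).
Definition L0x (f : Lf) : Lf :=
  addL (sh (-2) (-1) 1 0 f) (addL (sh 2 1 (-1) 0 f) (addL (sh 0 0 0 1 f) (sh 0 0 0 (-1) f))).
Definition Th (k1 k2 : int) (f : Lf) : Lf :=
  fun e a b c => f (e + 2 * a + 2 * b - (k1 + k2)) (k1 - a) (k2 - b) c.

Definition piL (f : Lf) : vec := fun e a b c =>
  let A := Posz a.+1 in let B := Posz b.+1 in let C := Posz c.+1 in
  f e A B C - f e (- A) B C - f e A (- B) C + f e (- A) (- B) C
  - f e A B (- C) + f e (- A) B (- C) + f e A (- B) (- C) - f e (- A) (- B) (- C).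

Lemma indE (x y u v : int) : (x = y <-> u = v) -> ind (x == y) = ind (u == v).
Proof. by move=> H; rewrite /ind; case: eqP => h1; case: eqP => h2 //; tauto. Qed.

Lemma piL_add f g : piL (addL f g) = vadd (piL f) (piL g).
Proof. apply: functional_extensionality_dep => e; do 3 (apply: functional_extensionality_dep => ?).
rewrite /piL /addL /vadd /=; ring. Qed.
Lemma piL_opp f : piL (oppL f) = vopp (piL f).
Proof. apply: functional_extensionality_dep => e; do 3 (apply: functional_extensionality_dep => ?).
rewrite /piL /oppL /vopp /=; ring. Qed.
Lemma piL_sub f g : piL (subL f g) = vsub (piL f) (piL g).
Proof. by rewrite /subL piL_add piL_opp. Qed.
Lemma piL_zero : piL zeroL = vzero.
Proof. apply: functional_extensionality_dep => e; do 3 (apply: functional_extensionality_dep => ?).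
rewrite /piL /zeroL /vzero /=; ring. Qed.
Lemma piL_shA d f : piL (shA d f) = vshiftA d (piL f).
Proof. by []. Qed.
Lemma piL_iy f : piL (iy f) = vopp (piL f).
Proof. apply: functional_extensionality_dep => e; do 3 (apply: functional_extensionality_dep => ?).
rewrite /piL /iy /vopp /= !opprK; ring. Qed.
Lemma piL_ix f : piL (ix f) = vopp (piL f).
Proof. apply: functional_extensionality_dep => e; do 3 (apply: functional_extensionality_dep => ?).
rewrite /piL /ix /vopp /= !opprK; ring. Qed.
Lemma piL_fix_iy f : iy f = f -> piL f = vzero.
Proof. move=> H. have := piL_iy f; rewrite H => E.
apply: functional_extensionality_dep => e; apply: functional_extensionality_dep => a;
apply: functional_extensionality_dep => b; apply: functional_extensionality_dep => c.
have := congr1 (fun v => v e a b c) E; rewrite /vopp /vzero /= => h. lia. Qed.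


Definition chi (a : nat) (p : int) : int := ind (Posz a.+1 == p) - ind (- Posz a.+1 == p).

Lemma chiE (a : nat) (n : int) :
  chi a (n + 1) = match ext n with Some (t, m) => if a == m then t else 0 | None => 0 end.
Proof.
rewrite /chi /ind; case: n => [m|[|m]] /=; repeat (case: eqP => /= ?); lia.
Qed.

Lemma piL_dl e p q r e' a b d :
  piL (dl e p q r) e' a b d = ind (e' == e) * chi a p * chi b q * chi d r.
Proof. rewrite /piL /dl /chi /=; ring. Qed.

Lemma mon_pi c e n1 n2 n3 e' a b d :
  mon c e n1 n2 n3 e' a b d = c * piL (dl e (n1+1) (n2+1) (n3+1)) e' a b d.
Proof.
rewrite piL_dl !chiE /mon.
case: (ext n1) => [[t1 m1]|]; case: (ext n2) => [[t2 m2]|]; case: (ext n3) => [[t3 m3]|];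
  rewrite /ind; repeat (case: eqP => /= _); ring.
Qed.


Ltac fext := let e := fresh "e" in let a := fresh "a" in let b := fresh "b" in let c := fresh "c" in
  extensionality e; extensionality a; extensionality b; extensionality c.

Lemma sh_dl de da db dc e a b c :
  sh de da db dc (dl e a b c) = dl (e + de) (a + da) (b + db) (c + dc).
Proof. fext; rewrite /sh /dl; congr (_ * _ * _ * _); apply: indE; lia. Qed.
Lemma shA_dl de e a b c : shA de (dl e a b c) = dl (e + de) a b c.
Proof. fext; rewrite /shA /dl; congr (_ * _ * _ * _); apply: indE; lia. Qed.
Lemma iy_dl e a b c : iy (dl e a b c) = dl e a (- b) c.
Proof. fext; rewrite /iy /dl; congr (_ * _ * _ * _); apply: indE; lia. Qed.
Lemma ix_dl e a b c : ix (dl e a b c) = dl e (- a) b c.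
Proof. fext; rewrite /ix /dl; congr (_ * _ * _ * _); apply: indE; lia. Qed.
Lemma Th_dl k1 k2 e0 a0 b0 c0 :
  Th k1 k2 (dl e0 a0 b0 c0) = dl (e0 + 2 * a0 + 2 * b0 - (k1 + k2)) (k1 - a0) (k2 - b0) c0.
Proof.
fext; rewrite /Th /dl /ind. repeat (case: eqP => ?); lia.
Qed.

Lemma L0_add f g : L0 (addL f g) = addL (L0 f) (L0 g).
Proof. fext; rewrite /L0 /addL /sh; ring. Qed.
Lemma L0_opp f : L0 (oppL f) = oppL (L0 f).
Proof. fext; rewrite /L0 /addL /oppL /sh; ring. Qed.
Lemma L0_sub f g : L0 (subL f g) = subL (L0 f) (L0 g).
Proof. by rewrite /subL L0_add L0_opp. Qed.

Lemma iy_L0 f : iy (L0 f) = L0y (iy f).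
Proof. fext; rewrite /iy /L0 /L0y /addL /sh. pair_atoms f. ring. Qed.
Lemma iy_L0y f : iy (L0y f) = L0 (iy f).
Proof. fext; rewrite /iy /L0 /L0y /addL /sh. pair_atoms f. ring. Qed.
Lemma ix_L0 f : ix (L0 f) = L0x (ix f).
Proof. fext; rewrite /ix /L0 /L0x /addL /sh. pair_atoms f. ring. Qed.
Lemma ix_L0x f : ix (L0x f) = L0 (ix f).
Proof. fext; rewrite /ix /L0 /L0x /addL /sh. pair_atoms f. ring. Qed.
Lemma L0_L0y f : L0 (L0y f) = L0y (L0 f).
Proof. fext; rewrite /L0 /L0y /addL /sh. pair_atoms f. ring. Qed.
Lemma L0_L0x f : L0 (L0x f) = L0x (L0 f).
Proof. fext; rewrite /L0 /L0x /addL /sh. pair_atoms f. ring. Qed.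
Lemma Th_L0 k1 k2 f : Th k1 k2 (L0 f) = L0 (Th k1 k2 f).
Proof. fext; rewrite /Th /L0 /addL /sh. pair_atoms f. ring. Qed.
Lemma Th_L0y k1 k2 f : Th k1 k2 (L0y f) = L0x (Th k1 k2 f).
Proof. fext; rewrite /Th /L0x /L0y /addL /sh. pair_atoms f. ring. Qed.

Ltac pair_pidl :=
  repeat match goal with
  | |- ?L = ?R =>
    match L with context [piL (dl ?x1 ?x2 ?x3 ?x4) ?x5 ?x6 ?x7 ?x8] =>
    lazymatch R with context [piL (dl x1 x2 x3 x4) x5 x6 x7 x8] => fail | _ => idtac end;
    match R with context [piL (dl ?y1 ?y2 ?y3 ?y4) ?y5 ?y6 ?y7 ?y8] =>
      lazymatch L with context [piL (dl y1 y2 y3 y4) y5 y6 y7 y8] => fail | _ => idtac end;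
      (replace (piL (dl y1 y2 y3 y4) y5 y6 y7 y8) with (piL (dl x1 x2 x3 x4) x5 x6 x7 x8)
         by (f_equal; [f_equal|..]; lia))
    end end end.

Lemma L0_dl e a b c : L0 (dl e a b c) =
  addL (dl (e - 2) (a + 1) (b + 1) c) (addL (dl (e + 2) (a - 1) (b - 1) c)
    (addL (dl e a b (c + 1)) (dl e a b (c - 1)))).
Proof. rewrite /L0 !sh_dl; fext; rewrite /addL; pair_atoms8 dl; ring. Qed.

Lemma piL_dl_shift x y z w e0 d a b c :
  piL (dl x y z w) (e0 - d) a b c = piL (dl (x + d) y z w) e0 a b c.
Proof. by rewrite -shA_dl piL_shA. Qed.

Lemma bridge k1 k2 e a b c :
  piL (L0 (subL (dl e a b c) (Th k1 k2 (dl e a b c)))) =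
  vshiftA (e + a + b) (vopp (R12s k1 k2 a b (c - 1))).
Proof.
rewrite Th_dl L0_sub !L0_dl piL_sub !piL_add.
fext; rewrite /vsub /vadd /vopp /vshiftA /R12s /vsub /vadd /vopp /R12 /vadd !mon_pi !piL_dl_shift.
pair_pidl. lia.
Qed.

Lemma piL_fix_ix f : ix f = f -> piL f = vzero.
Proof. move=> H. have := piL_ix f; rewrite H => E.
fext. have := congr1 (fun v => v e a b c) E; rewrite /vopp /vzero /= => h. lia. Qed.

Definition Tx (k1 a : int) (f : Lf) : Lf :=
  addL (sh (- 2 * a - 2 * k1) (k1 + a) 0 0 f) (if a == 0 then zeroL else sh (2 * a - 2 * k1) (k1 - a) 0 0 f).
Definition Sy (b : int) (f : Lf) : Lf :=
  addL (sh 0 0 (- b) 0 f) (if b == 0 then zeroL else sh 0 0 b 0 f).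
Definition gg k1 a b c := Tx k1 a (Sy b (dl 0 0 0 c)).

Lemma sh_add d1 d2 d3 d4 f g : sh d1 d2 d3 d4 (addL f g) = addL (sh d1 d2 d3 d4 f) (sh d1 d2 d3 d4 g).
Proof. by []. Qed.
Lemma sh_zero d1 d2 d3 d4 : sh d1 d2 d3 d4 zeroL = zeroL.
Proof. by []. Qed.
Lemma iy_add f g : iy (addL f g) = addL (iy f) (iy g). Proof. by []. Qed.
Lemma ix_add f g : ix (addL f g) = addL (ix f) (ix g). Proof. by []. Qed.
Lemma Th_add k1 k2 f g : Th k1 k2 (addL f g) = addL (Th k1 k2 f) (Th k1 k2 g). Proof. by []. Qed.
Lemma iy_zero : iy zeroL = zeroL. Proof. by []. Qed.
Lemma ix_zero : ix zeroL = zeroL. Proof. by []. Qed.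
Lemma Th_zero k1 k2 : Th k1 k2 zeroL = zeroL. Proof. by []. Qed.

Lemma gg_iy k1 a b c : iy (gg k1 a b c) = gg k1 a b c.
Proof.
rewrite /gg /Tx /Sy; case: (a =P 0) => [->|_]; case: (b =P 0) => [->|_]; rewrite ?eqxx;
rewrite ?sh_add ?sh_zero !sh_dl ?iy_add ?iy_zero !iy_dl; fext; rewrite /addL /zeroL;
pair_atoms8 dl; lia.
Qed.

Lemma gg_Th_ix k1 k2 a b c : ix (Th k1 k2 (gg k1 a b c)) = Th k1 k2 (gg k1 a b c).
Proof.
rewrite /gg /Tx /Sy; case: (a =P 0) => [->|_]; case: (b =P 0) => [->|_]; rewrite ?eqxx;
rewrite ?sh_add ?sh_zero !sh_dl ?Th_add ?Th_zero !Th_dl ?ix_add ?ix_zero !ix_dl; fext; rewrite /addL /zeroL;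
pair_atoms8 dl; lia.
Qed.

Lemma vanish k1 k2 a b c :
  piL (L0 (subL (L0y (gg k1 a b c)) (Th k1 k2 (L0y (gg k1 a b c))))) = vzero.
Proof.
rewrite L0_sub piL_sub.
rewrite (@piL_fix_iy (L0 (L0y (gg k1 a b c)))); last by rewrite iy_L0 iy_L0y gg_iy L0_L0y.
rewrite (@piL_fix_ix (L0 (Th k1 k2 (L0y (gg k1 a b c))))); last first.
  by rewrite Th_L0y ix_L0 ix_L0x gg_Th_ix L0_L0x.
fext; rewrite /vsub /vadd /vopp /vzero; ring.
Qed.




Lemma chi_neg d r : chi d (- r) = - chi d r.
Proof. rewrite /chi; rewrite (@indE _ _ (- Posz d.+1) r); last lia.
rewrite (@indE (- Posz d.+1) (- r) d.+1 r); last lia. ring. Qed.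

Lemma R12s_negz k1 k2 n1 n2 n3 :
  R12s k1 k2 n1 n2 n3 = vopp (R12s k1 k2 n1 n2 (- n3 - 2)).
Proof.
fext; rewrite /R12s /vsub /vadd /vopp /R12 /vadd !mon_pi.
have negz : forall x y z w e' a' b' c', piL (dl x y z w) e' a' b' c' = - piL (dl x y z (- w)) e' a' b' c'.
  by move=> *; rewrite !piL_dl chi_neg; ring.
rewrite [piL (dl _ _ _ (- n3 - 2 + 1)) _ _ _ _]negz.
rewrite [piL (dl _ _ _ (- n3 - 2 + 1)) _ _ _ _]negz.
rewrite [piL (dl _ _ _ (- n3 - 2 + 1)) _ _ _ _]negz.
rewrite [piL (dl _ _ _ (- n3 - 2 + 1)) _ _ _ _]negz.
rewrite [piL (dl _ _ _ (- n3 - 2 + 1 + 1)) _ _ _ _]negz.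
rewrite [piL (dl _ _ _ (- n3 - 2 + 1 + 1)) _ _ _ _]negz.
rewrite [piL (dl _ _ _ (- n3 - 2 - 1 + 1)) _ _ _ _]negz.
rewrite [piL (dl _ _ _ (- n3 - 2 - 1 + 1)) _ _ _ _]negz.
pair_pidl. lia.
Qed.

Lemma R12s_m1 k1 k2 n1 n2 : R12s k1 k2 n1 n2 (-1) = vzero.
Proof.
have E := R12s_negz k1 k2 n1 n2 (-1).
have h1 : (- (-1) - 2 : int) = -1 by [].
rewrite h1 in E.
fext; have := congr1 (fun v => v e a b c) E; rewrite /vopp /vzero /= => h; lia.
Qed.

Lemma R12s_sym k1 k2 n1 n2 n3 :
  R12s k1 k2 n1 n2 n3 = vopp (R12s k1 k2 (- n1 + k1) (- n2 + k2) n3).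
Proof.
rewrite /R12s.
have -> : - (- n1 + k1) + k1 = n1 by ring.
have -> : - (- n2 + k2) + k2 = n2 by ring.
fext; rewrite /vsub /vadd /vopp; ring.
Qed.

Section Main.
Variables k1 k2 : int.
Hypothesis hk1 : 1 <= k1.
Hypothesis hk12 : k1 <= k2.

Notation S := (gen_submod (Jmin k1 k2)).

Lemma S_sub x y : S x -> S y -> S (vsub x y).
Proof. by move=> hx hy; apply: gsmD => //; apply: gsmN. Qed.

Lemma S_eq x y : x = y -> S x -> S y. Proof. by move=> ->. Qed.

Definition GL (f : Lf) := S (piL (L0 (subL f (Th k1 k2 f)))).

Lemma GL_expand f g : piL (L0 (subL (addL f g) (Th k1 k2 (addL f g)))) =
  vadd (piL (L0 (subL f (Th k1 k2 f)))) (piL (L0 (subL g (Th k1 k2 g)))).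
Proof. rewrite -piL_add; congr piL; fext; rewrite /L0 /subL /addL /oppL /sh /Th; ring. Qed.

Lemma GL_add f g : GL f -> GL g -> GL (addL f g).
Proof. by rewrite /GL GL_expand => hf hg; apply: gsmD. Qed.

Lemma GL_addl f g : GL (addL f g) -> GL g -> GL f.
Proof.
rewrite /GL GL_expand => h hg.
apply: (S_eq _ (gsmD h (gsmN hg))); fext; rewrite /vadd /vopp; ring.
Qed.

Lemma GL_zero : GL zeroL.
Proof.
rewrite /GL; apply: (S_eq _ (@gsm0 _)); fext; rewrite /piL /L0 /subL /addL /oppL /sh /Th /zeroL /vzero /=; ring.
Qed.

Lemma GL_dl e a b c : S (R12s k1 k2 a b (c - 1)) -> GL (dl e a b c).
Proof. by move=> h; rewrite /GL bridge; apply: gsmA; apply: gsmN. Qed.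

Lemma GL_dl_inv e a b c : GL (dl e a b c) -> S (R12s k1 k2 a b (c - 1)).
Proof.
rewrite /GL bridge => h; have := gsmN (gsmA (- (e + a + b)) h).
apply: S_eq; fext; rewrite /vopp /vshiftA opprK.
by have -> : e0 - - (e + a + b) - (e + a + b) = e0 by ring.
Qed.

Lemma GL_y0 a b c : GL (L0y (gg k1 a b c)).
Proof. by rewrite /GL vanish; apply: gsm0. Qed.

Definition okb (m : int) (n1 n2 : int) := (k1 < n1 -> - m <= n2) /\ (n1 < 0 -> n2 <= k2 + m).

Lemma peel3 T P1 P2 P3 : GL (addL (addL (addL T P1) P2) P3) -> GL P1 -> GL P2 -> GL P3 -> GL T.
Proof. move=> h h1 h2 h3; exact: (GL_addl (GL_addl (GL_addl h h3) h2) h1). Qed.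

Ltac leaves IH := rewrite ?sh_add ?sh_zero ?sh_dl;
  repeat match goal with
  | |- GL (addL _ _) => apply: GL_add
  | |- GL zeroL => exact: GL_zero
  | |- GL (dl _ _ _ _) => apply: GL_dl; apply: IH; rewrite /okb; split; lia
  end.

Lemma step (a b n3 : int) : 0 <= a -> 0 <= b ->
  (forall n1 n2 n3, okb b n1 n2 -> S (R12s k1 k2 n1 n2 n3)) ->
  S (R12s k1 k2 (k1 + a + 1) (- b - 1) n3).
Proof.
move=> ha hb IH.
have H0 := GL_y0 a b (n3 + 1).
rewrite /gg in H0.
set F := Tx k1 a (Sy b (dl 0 0 0 (n3 + 1))) in H0.
pose TGT := sh (-2) 1 (-1) 0 (sh (- 2 * a - 2 * k1) (k1 + a) 0 0 (sh 0 0 (- b) 0 (dl 0 0 0 (n3 + 1)))).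
pose P1 := sh (-2) 1 (-1) 0 (sh (- 2 * a - 2 * k1) (k1 + a) 0 0
             (if b == 0 then zeroL else sh 0 0 b 0 (dl 0 0 0 (n3 + 1)))).
pose P2 := sh (-2) 1 (-1) 0 (if a == 0 then zeroL else
             sh (2 * a - 2 * k1) (k1 - a) 0 0 (Sy b (dl 0 0 0 (n3 + 1)))).
pose P3 := addL (sh 2 (-1) 1 0 F) (addL (sh 0 0 0 1 F) (sh 0 0 0 (-1) F)).
have E : L0y F = addL (addL (addL TGT P1) P2) P3 by [].
rewrite E in H0.
have HT : GL TGT.
  apply: (peel3 H0).
  - rewrite /P1; case: (b =P 0) => hb0; leaves IH.
  - rewrite /P2 /Sy; case: (a =P 0) => ha0; case: (b =P 0) => hb0; leaves IH.
  - rewrite /P3 /F /Tx /Sy; case: (a =P 0) => ha0; case: (b =P 0) => hb0; leaves IH.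
rewrite /TGT !sh_dl in HT.
have := GL_dl_inv HT; apply: S_eq; congr R12s; lia.
Qed.

Lemma h2 (y : int) : ((y%:~R : rat) * 2) = (y * 2)%:~R.
Proof. by rewrite intrM. Qed.
Lemma t1 (x y : int) : (((x%:~R : rat) / 2 < y%:~R)) = (x < y * 2).
Proof. by rewrite ltr_pdivrMr // h2 ltr_int. Qed.
Lemma t2 (x y : int) : (((x%:~R : rat) / 2 <= y%:~R)) = (x <= y * 2).
Proof. by rewrite ler_pdivrMr // h2 ler_int. Qed.
Lemma t3 (x y : int) : ((y%:~R : rat) <= x%:~R / 2) = (y * 2 <= x).
Proof. by rewrite ler_pdivlMr // h2 ler_int. Qed.
Lemma t4 (n1 k : int) : ((n1%:~R : rat) \in `]k%:~R, +oo[) = (k < n1).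
Proof. by rewrite in_itv /= andbT ltr_int. Qed.
Lemma t5 (n1 k : int) : ((n1%:~R : rat) \in `](k%:~R / 2), k%:~R]) = (k < n1 * 2) && (n1 <= k).
Proof. by rewrite in_itv /= t1 ler_int. Qed.
Lemma t6 (n1 k : int) : ((n1%:~R : rat) \in `[0, k%:~R / 2]) = (0 <= n1) && (n1 * 2 <= k).
Proof. by rewrite in_itv /= t3 ler0z. Qed.
Lemma t7 (n1 k : int) : ((n1%:~R : rat) \in `](k%:~R / 2), +oo[) = (k < n1 * 2).
Proof. by rewrite in_itv /= andbT t1. Qed.
Lemma t8 (n1 k : int) : ((n1%:~R : rat) \in `[k%:~R / 2, +oo[) = (k <= n1 * 2).
Proof. by rewrite in_itv /= andbT t2. Qed.
Lemma t9 (n1 : int) : ((n1%:~R : rat) \in `[0, +oo[) = (0 <= n1).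
Proof. by rewrite in_itv /= andbT ler0z. Qed.

Lemma reg1 n1 n2 n3 : k1 < n1 -> 0 <= n2 -> 0 <= n3 -> S (R12s k1 k2 n1 n2 n3).
Proof. move=> h1 h2 h3; apply: gsm_gen; left; exists n1, n2, n3; split => //; by rewrite ?t4 ?t9. Qed.
Lemma reg2 n1 n2 n3 : k1 < n1 * 2 -> n1 <= k1 -> k2 < n2 * 2 -> 0 <= n3 -> S (R12s k1 k2 n1 n2 n3).
Proof. move=> h1 h1' h2 h3; apply: gsm_gen; right; left; exists n1, n2, n3; split => //;
  by rewrite ?t5 ?t7 ?h1 ?h1'. Qed.
Lemma reg3 n1 n2 n3 : 0 <= n1 -> n1 * 2 <= k1 -> k2 <= n2 * 2 -> 0 <= n3 -> S (R12s k1 k2 n1 n2 n3).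
Proof. move=> h1 h1' h2 h3; apply: gsm_gen; right; right; exists n1, n2, n3; split => //;
  by rewrite ?t6 ?t8 ?h1 ?h1'. Qed.

Lemma S_sym n1 n2 n3 : S (R12s k1 k2 (- n1 + k1) (- n2 + k2) n3) -> S (R12s k1 k2 n1 n2 n3).
Proof. by move=> h; rewrite R12s_sym; apply: gsmN. Qed.

Lemma good_nonneg n1 n2 n3 : okb 0 n1 n2 -> 0 <= n3 -> S (R12s k1 k2 n1 n2 n3).
Proof.
move=> [o1 o2] h3.
case: (ltrP k1 n1) => c1.
  by apply: reg1 => //; move: (o1 c1); lia.
case: (ltrP n1 0) => c2.
  by apply: S_sym; apply: reg1 => //; [lia | move: (o2 c2); lia].
case: (ltrP k1 (n1 * 2)) => c3.
  case: (ltrP k2 (n2 * 2)) => c4; first by apply: reg2.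
  by apply: S_sym; apply: reg3 => //; lia.
case: (lerP k2 (n2 * 2)) => c4; first by apply: reg3.
case: (ltrP k1 ((- n1 + k1) * 2)) => c5.
  by apply: S_sym; apply: reg2 => //; lia.
by apply: S_sym; apply: reg3 => //; lia.
Qed.

Lemma good_all n1 n2 n3 : okb 0 n1 n2 -> S (R12s k1 k2 n1 n2 n3).
Proof.
move=> o.
case: (lerP 0 n3) => h; first exact: good_nonneg.
case: (eqVneq n3 (-1)) => [->|hn]; first by rewrite R12s_m1; apply: gsm0.
rewrite R12s_negz; apply: gsmN; apply: good_nonneg => //; lia.
Qed.

Lemma main_ind (m : nat) : forall n1 n2 n3, okb m%:Z n1 n2 -> S (R12s k1 k2 n1 n2 n3).
Proof.
elim: m => [|m IH] n1 n2 n3 [o1 o2]; first exact: good_all.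
have IH' : forall n1 n2 n3, okb m%:Z n1 n2 -> S (R12s k1 k2 n1 n2 n3) by [].
case: (ltrP k1 n1) => c1.
  case: (lerP (- m%:Z) n2) => c2.
    by apply: IH; split => // h; lia.
  have := @step (n1 - k1 - 1) m%:Z n3 ltac:(lia) ltac:(lia) IH'.
  by apply: S_eq; congr R12s; lia.
case: (ltrP n1 0) => c3.
  case: (lerP n2 (k2 + m%:Z)) => c4.
    by apply: IH; split => // h; lia.
  apply: S_sym.
  have := @step (- n1 - 1) m%:Z n3 ltac:(lia) ltac:(lia) IH'.
  by apply: S_eq; congr R12s; lia.
by apply: IH; split => h; lia.
Qed.

Lemma all_R12s n1 n2 n3 : S (R12s k1 k2 n1 n2 n3).
Proof.
apply: (@main_ind (absz n2 + absz k2)%N); split => h; lia.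
Qed.

End Main.

Theorem proposition4p1 (k1 k2 : int) :
  1 <= k1 -> k1 <= k2 ->
  forall v : vec, gen_submod (Rall k1 k2) v <-> gen_submod (Jmin k1 k2) v.
Proof.
move=> hk1 hk12 v; split.
- elim=> [x [n1 [n2 [n3 ->]]]| |x y _ hx _ hy|x _ hx|f x _ hx].
  + exact: all_R12s.
  + exact: gsm0.
  + exact: gsmD.
  + exact: gsmN.
  + exact: gsmA.
- elim=> [x hx| |x y _ hx _ hy|x _ hx|f x _ hx].
  + apply: gsm_gen.
    by case: hx => [|[|]] [n1 [n2 [n3 [_ _ _ ->]]]]; exists n1, n2, n3.
  + exact: gsm0.
  + exact: gsmD.
  + exact: gsmN.
  + exact: gsmA.
Qed.
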